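(* Let $\Omega=(0,1)^2$, $N\ge2$, $h=1/N$, with grid points $(ih,jh)$, $0\le i,j\le N$; vectors $Z\in\mathbb{R}^{(N+1)^2}$ are indexed by grid points, $Z_I$ denotes the components at grid points in $\Omega$ and $Z_\partial$ those on $\partial\Omega$. Let $\mathcal{L}_h$ be the five-point operator $(\mathcal{L}_hZ)_{i,j}=-h^{-2}(z_{i-1,j}+z_{i+1,j}-4z_{i,j}+z_{i,j-1}+z_{i,j+1})$ at interior grid points. Let $\Omega=\Omega_1\cup\Omega_2$ be an overlapping decomposition into subdomains whose boundaries lie on grid lines; for $i=1,2$ let $Z_i,Z_{i,I},Z_{i,\partial}$ be the components of $Z$ at grid points of $\overline{\Omega_i}$, $\Omega_i$, $\partial\Omega_i$, and $\mathcal{L}_h^{(i)}$ the five-point operator at grid points of $\Omega_i$ acting on vectors indexed by grid points of $\overline{\Omega_i}$. Let $\alpha>0$, $F,Y_d\in\mathbb{R}^{(N+1)^2}$, and let $(Y,P)$ solve $$\mathcal{L}_hY=F_I-\alpha^{-1}h^{-2}P_I,\ Y_\partial=0;\qquad \mathcal{L}_h(h^{-2}P)=Y_I-Y_{d,I},\ P_\partial=0.$$ Given $Y^{(0)},P^{(0)}$ with $Y^{(0)}_\partial=P^{(0)}_\partial=0$, for $k=0,1,2,\dots$ and $i=1,2$ (in the order $i=1$ then $i=2$) define $Y^{(2k+i)},P^{(2k+i)}$ by $$\mathcal{L}_h^{(i)}Y^{(2k+i)}_i=F_{i,I}-\alpha^{-1}h^{-2}P^{(2k+i)}_{i,I},\qquad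 \mathcal{L}_h^{(i)}(h^{-2}P^{(2k+i)}_i)=Y^{(2k+i)}_{i,I}-Y_{d,i,I},$$ $Y^{(2k+i)}_{i,\partial}=Y^{(2k+i-1)}_{i,\partial}$, $P^{(2k+i)}_{i,\partial}=P^{(2k+i-1)}_{i,\partial}$, and $Y^{(2k+i)},P^{(2k+i)}$ equal to $Y^{(2k+i-1)},P^{(2k+i-1)}$ at all grid points not in $\Omega_i$. Define $$E^{(j)}=(Y-Y^{(j)})^2+\frac{\alpha^{-1}}{h^4}(P-P^{(j)})^2$$ (componentwise squares). Consider also the Schwarz alternating method for $\mathcal{L}_hW=0$, $W_\partial=0$: $\mathcal{L}_h^{(i)}W^{(2k+i)}_i=0$, $W^{(2k+i)}_{i,\partial}=W^{(2k+i-1)}_{i,\partial}$, and $W^{(2k+i)}=W^{(2k+i-1)}$ at grid points not in $\Omega_i$. If the Schwarz alternating method for $\mathcal{L}_hW=0$, $W_\partial=0$ is convergent, then the method above for $(Y,P)$ is convergent. Moreover, if the Schwarz alternating method for $\mathcal{L}_hW=0$, $W_\partial=0$ has convergence rate $\rho_{e,d}\in(0,1)$ under the maximum norm (i.e. $\max\{W^{(2k)}\}\le\rho_{e,d}\max\{W^{(2(k-1))}\}$ for $k\ge1$ and any initial guess), then for $k=1,2,\dots$, $$\max\{E^{(2k)}\}\le\rho_{e,d}\max\{E^{(2(k-1))}\},$$ where $\max$ is taken over all components.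
   Context: The $(Y,P)$ system is the discrete first-order optimality system (control eliminated) of the five-point finite difference discretization of minimizing $\frac12\|y-y_d\|_{L^2}^2+\frac\alpha2\|u\|_{L^2}^2$ subject to $-\Delta y=f+u$ in $(0,1)^2$, $y=0$ on the boundary, with the objective approximated by the trapezoidal rule. *)

(* Defs.v *)
From HB Require Import structures.
From mathcomp Require Import all_boot all_order all_algebra.
From mathcomp Require Import all_classical all_reals all_analysis.
Set Implicit Arguments. Unset Strict Implicit. Unset Printing Implicit Defensive.
Import Order.TTheory GRing.Theory Num.Theory.
Import numFieldNormedType.Exports.
Local Open Scope ring_scope.
Local Open Scope classical_set_scope.

Section Defs.
Variable R : realType.
Variable N : nat.

Definition gvec := 'I_N.+1 -> 'I_N.+1 -> R.

(* access by natural-number indices (only used for in-range indices) *)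
Definition gat (Z : gvec) (i j : nat) : R := Z (inord i) (inord j).

Definition hstep : R := (N%:R)^-1.

Definition Lh (Z : gvec) (i j : nat) : R :=
  - hstep ^- 2 * (gat Z i.-1 j + gat Z i.+1 j - 4 * gat Z i j
                  + gat Z i j.-1 + gat Z i j.+1).

Definition interior (i j : nat) : bool :=
  [&& (0 < i)%N, (i < N)%N, (0 < j)%N & (j < N)%N].

(* A subdomain whose boundary lies on grid lines is the interior of a union
   of closed grid cells; cell (a,b), a,b < N, is [a h,(a+1) h] x [b h,(b+1) h]. *)
Definition cellset := nat -> nat -> bool.

Definition valid_cells (C : cellset) : Prop :=
  forall a b, C a b -> (a < N)%N /\ (b < N)%N.

(* grid point (i,j) lies in the open subdomain  interior(U cells of C):
   exactly when all four cells around it belong to C *)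
Definition in_dom (C : cellset) (i j : nat) : bool :=
  [&& (0 < i)%N, (0 < j)%N, C i.-1 j.-1, C i.-1 j, C i j.-1 & C i j].

(* Omega = Omega_1 U Omega_2 is an overlapping decomposition.
   (For N >= 2, Omega_1 U Omega_2 = Omega iff every interior grid point lies
   in Omega_1 or in Omega_2; Omega_1 /\ Omega_2 <> empty iff a common cell.) *)
Definition overlapping_decomposition (C1 C2 : cellset) : Prop :=
  [/\ valid_cells C1, valid_cells C2,
      (forall i j, interior i j -> in_dom C1 i j || in_dom C2 i j)
    & exists a b, C1 a b && C2 a b].

Definition solves_system (alpha : R) (F Yd Y P : gvec) : Prop :=
  forall i j : 'I_N.+1,
    if interior i j then
      Lh Y i j = F i j - alpha^-1 * hstep ^- 2 * P i j /\
      Lh (fun a b => hstep ^- 2 * P a b) i j = Y i j - Yd i j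
    else Y i j = 0 /\ P i j = 0.

Definition bdry_zero (Z : gvec) : Prop :=
  forall i j : 'I_N.+1, ~~ interior i j -> Z i j = 0.

Definition sub_step (alpha : R) (F Yd : gvec) (C : cellset)
    (Y0 P0 Y1 P1 : gvec) : Prop :=
  forall i j : 'I_N.+1,
    if in_dom C i j then
      Lh Y1 i j = F i j - alpha^-1 * hstep ^- 2 * P1 i j /\
      Lh (fun a b => hstep ^- 2 * P1 a b) i j = Y1 i j - Yd i j
    else Y1 i j = Y0 i j /\ P1 i j = P0 i j.

(* iterate n+1 = 2k+i uses Omega_1 if n+1 is odd, Omega_2 if even *)
Definition schwarz_YP (alpha : R) (F Yd : gvec) (C1 C2 : cellset)
    (Yk Pk : nat -> gvec) : Prop :=
  bdry_zero (Yk 0%N) /\ bdry_zero (Pk 0%N) /\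
  forall n, sub_step alpha F Yd (if odd n.+1 then C1 else C2)
                     (Yk n) (Pk n) (Yk n.+1) (Pk n.+1).

Definition sub_step_W (C : cellset) (W0 W1 : gvec) : Prop :=
  forall i j : 'I_N.+1,
    if in_dom C i j then Lh W1 i j = 0 else W1 i j = W0 i j.

Definition schwarz_W (C1 C2 : cellset) (Wk : nat -> gvec) : Prop :=
  bdry_zero (Wk 0%N) /\
  forall n, sub_step_W (if odd n.+1 then C1 else C2) (Wk n) (Wk n.+1).

Definition mxnorm (Z : gvec) : R :=
  \big[Num.max/0]_(i < N.+1) \big[Num.max/0]_(j < N.+1) `|Z i j|.

Definition errE (alpha : R) (Y P Yn Pn : gvec) : gvec :=
  fun i j => (Y i j - Yn i j) ^+ 2
             + alpha^-1 / hstep ^+ 4 * (P i j - Pn i j) ^+ 2.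

Definition W_convergent (C1 C2 : cellset) : Prop :=
  forall Wk : nat -> gvec, schwarz_W C1 C2 Wk ->
    forall i j, (fun n => Wk n i j) @ \oo --> (0 : R).

Definition W_rate (C1 C2 : cellset) (rho : R) : Prop :=
  forall Wk : nat -> gvec, schwarz_W C1 C2 Wk ->
    forall k, (0 < k)%N -> mxnorm (Wk (2 * k)%N) <= rho * mxnorm (Wk (2 * k.-1)%N).

Definition YP_convergent (alpha : R) (F Yd Y P : gvec) (C1 C2 : cellset) : Prop :=
  forall Yk Pk : nat -> gvec, schwarz_YP alpha F Yd C1 C2 Yk Pk ->
    forall i j, (fun n => Yk n i j) @ \oo --> Y i j /\
                (fun n => Pk n i j) @ \oo --> P i j.

End Defs.

(* Main.v *)
Require Import Defs.
From HB Require Import structures.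
From mathcomp Require Import all_boot all_order all_algebra.
From mathcomp Require Import all_classical all_reals all_analysis.
From mathcomp Require Import ring lra.
Import Order.TTheory GRing.Theory Num.Theory.
Local Open Scope ring_scope.

Section Alg.
Variable R : realType.

Definition nrm (c x y : R) := Num.sqrt (x ^+ 2 + c * y ^+ 2).

Lemma le_sq (u v : R) : 0 <= v -> u ^+ 2 <= v ^+ 2 -> u <= v.
Proof. move=> hv h; rewrite leNgt; apply/negP => h2; nra. Qed.

Lemma nrm_ge0 (c x y : R) : 0 <= nrm c x y.
Proof. exact: sqrtr_ge0. Qed.

Lemma nrm_sq (c x y : R) : 0 <= c -> nrm c x y ^+ 2 = x ^+ 2 + c * y ^+ 2.
Proof. move=> hc; rewrite sqr_sqrtr //; nra. Qed.

Lemma nrm_tri (c x1 y1 x2 y2 : R) : 0 <= c ->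
  nrm c (x1 + x2) (y1 + y2) <= nrm c x1 y1 + nrm c x2 y2.
Proof.
move=> hc; apply: le_sq; first by rewrite addr_ge0 ?nrm_ge0.
have s1 := nrm_sq c x1 y1 hc; have s2 := nrm_sq c x2 y2 hc; have s3 := nrm_sq c (x1+x2) (y1+y2) hc.
have g1 := nrm_ge0 c x1 y1; have g2 := nrm_ge0 c x2 y2.
set n1 := nrm c x1 y1 in s1 g1 *; set n2 := nrm c x2 y2 in s2 g2 *.
rewrite s3.
have cs : (x1 * x2 + c * y1 * y2) ^+ 2 <= (n1 * n2) ^+ 2.
  rewrite exprMn s1 s2.
  have : 0 <= c * (x1 * y2 - x2 * y1) ^+ 2 by apply: mulr_ge0 => //; exact: sqr_ge0.
  move=> h; have e : (x1 ^+ 2 + c * y1 ^+ 2) * (x2 ^+ 2 + c * y2 ^+ 2) - (x1 * x2 + c * y1 * y2) ^+ 2 = c * (x1 * y2 - x2 * y1) ^+ 2 by ring.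
  lra.
have := le_sq _ _ (mulr_ge0 g1 g2) cs => h.
have e : (n1 + n2) ^+ 2 = n1 ^+ 2 + n2 ^+ 2 + 2 * (n1 * n2) by ring.
rewrite e s1 s2.
have e2 : (x1 + x2) ^+ 2 + c * (y1 + y2) ^+ 2 = (x1 ^+ 2 + c * y1 ^+ 2) + (x2 ^+ 2 + c * y2 ^+ 2) + 2 * (x1 * x2 + c * y1 * y2) by ring.
rewrite e2; lra.
Qed.

Lemma nrm_tri4 (c x1 y1 x2 y2 x3 y3 x4 y4 : R) : 0 <= c ->
  nrm c (x1 + x2 + x3 + x4) (y1 + y2 + y3 + y4) <=
  nrm c x1 y1 + nrm c x2 y2 + nrm c x3 y3 + nrm c x4 y4.
Proof.
move=> hc.
apply: le_trans (nrm_tri _ _ _ _ _ hc) _; rewrite lerD2r.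
apply: le_trans (nrm_tri _ _ _ _ _ hc) _; rewrite lerD2r.
exact: nrm_tri.
Qed.

Lemma key_ineq (a A e q Se Sq : R) : 0 < a -> 
  Se = 4 * e + a * q -> e = A ^+ 2 * (4 * q - Sq) ->
  4 * nrm (a * A ^+ 2) e q <= nrm (a * A ^+ 2) Se Sq.
Proof.
move=> ha h1 h2.
have hc : 0 <= a * A ^+ 2 by apply: mulr_ge0; [lra| exact: sqr_ge0].
apply: le_sq; first exact: nrm_ge0.
rewrite exprMn nrm_sq // nrm_sq //.
set f := 4 * q - Sq in h2.
have eSq : Sq = 4 * q - f by rewrite /f; ring.
rewrite eSq h1 h2.
have ee : (4 * (A ^+ 2 * f) + a * q) ^+ 2 + a * A ^+ 2 * (4 * q - f) ^+ 2
   - 4 ^+ 2 * ((A ^+ 2 * f) ^+ 2 + a * A ^+ 2 * q ^+ 2) = a ^+ 2 * q ^+ 2 + a * (A * f) ^+ 2 by ring.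
have : 0 <= a ^+ 2 * q ^+ 2 + a * (A * f) ^+ 2.
  apply: addr_ge0; apply: mulr_ge0; rewrite ?sqr_ge0 //; lra.
lra.
Qed.
End Alg.
Arguments nrm {R}. Arguments nrm_ge0 {R}. Arguments nrm_sq {R}. Arguments nrm_tri {R}. Arguments nrm_tri4 {R}. Arguments key_ineq {R}. Arguments le_sq {R}.

Section Grid.
Variable R : realType.
Variable N : nat.

Lemma exists_argmax (d : gvec R N) : exists p : 'I_N.+1 * 'I_N.+1,
  forall i j, d i j <= d p.1 p.2.
Proof.
case: (@Order.TotalTheory.arg_maxP _ R _ (ord0, ord0) xpredT (fun p : 'I_N.+1 * 'I_N.+1 => d p.1 p.2) isT).
move=> p _ H; exists p => i j; exact: (H (i, j)).
Qed.

Lemma maxprin (C : cellset) (d : gvec R N) : valid_cells N C ->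
  (forall i j : 'I_N.+1, in_dom C i j ->
     4 * gat d i j <= gat d i.-1 j + gat d i.+1 j + gat d i j.-1 + gat d i j.+1) ->
  (forall i j : 'I_N.+1, ~~ in_dom C i j -> d i j <= 0) ->
  forall i j, d i j <= 0.
Proof.
move=> hv hsub hout.
have [[p1 p2] hp] := exists_argmax d.
rewrite /= in hp.
have hg : forall a b, gat d a b <= d p1 p2 by move=> a b; apply: hp.
move=> i j; apply: le_trans (hp i j) _.
rewrite leNgt; apply/negP => Mpos.
have key : forall t, (p1 + t <= N)%N -> gat d (p1 + t) p2 = d p1 p2.
  elim=> [|t IH] ht.
    by rewrite addn0 /gat !inord_val.
  have ht' : (p1 + t <= N)%N by apply: leq_trans ht; rewrite leq_add2l.
  have {}IH := IH ht'.
  pose a : 'I_N.+1 := inord (p1 + t).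
  have va : (a : nat) = (p1 + t)%N by rewrite inordK // ltnS.
  have da : d a p2 = d p1 p2 by rewrite -IH /gat inord_val.
  have ina : in_dom C a p2.
    apply/negPn/negP => /hout; rewrite da => h; lra.
  have := hsub _ _ ina.
  have e1 : gat d a p2 = d p1 p2 by rewrite /gat !inord_val.
  rewrite e1 va.
  have h1 := hg (p1 + t)%N.-1 p2; have h2 := hg (p1 + t)%N.+1 p2.
  have h3 := hg (p1 + t)%N p2.-1; have h4 := hg (p1 + t)%N p2.+1.
  rewrite addnS. move=> h; apply/eqP; rewrite eq_le hg /=; lra.
have hN : (p1 + (N - p1) <= N)%N by rewrite subnKC // -ltnS.
have := key _ hN; rewrite subnKC; last by rewrite -ltnS.
pose b : 'I_N.+1 := inord N.
have nb : ~~ in_dom C b p2.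
  rewrite /in_dom inordK //; apply/negP => /and5P [_ _ _ _ /andP [_ hc]].
  by have [] := hv _ _ hc; rewrite ltnn.
have := hout _ _ nb; rewrite /gat /b inord_val => h1 h2; lra.
Qed.

Section Lin.
Variable C : cellset.

Definition Tf (A : 'M[R]_(N.+1, N.+1)) : 'M[R]_(N.+1, N.+1) :=
  \matrix_(i, j) (if in_dom C i j then Lh (fun a b => A a b) i j else A i j).

Lemma Tf_lin : linear Tf.
Proof.
move=> k A B; apply/matrixP => i j; rewrite !mxE /=.

case: ifP => _ //.
rewrite /Lh /gat !mxE; ring.
Qed.

HB.instance Definition _ := GRing.isLinear.Build R _ _ _ Tf Tf_lin.

Lemma Tf_surj : (forall A, Tf A = 0 -> A = 0) -> forall G, exists A, Tf A = G.
Proof.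
move=> inj G.
have rf : row_free (lin_mx Tf).
  rewrite -kermx_eq0; apply/eqP/row_matrixP => i; rewrite row0.
  set r := row i _.
  have hr : r *m lin_mx Tf = 0 by apply/sub_kermxP; exact: row_sub.
  move: hr; rewrite -(vec_mxK r) mul_vec_lin => /eqP.
  rewrite mxvec_eq0 => /eqP /inj h; by rewrite h linear0.
rewrite row_free_unit in rf.
exists (vec_mx (mxvec G *m invmx (lin_mx Tf))).
by rewrite -mx_vec_lin vec_mxK mulmxKV // mxvecK.
Qed.
End Lin.

Section Main.
Hypothesis hN : (0 < N)%N.
Variable alpha : R.
Hypothesis halpha : 0 < alpha.
Variables F Yd Y P : gvec R N.
Hypothesis hsol : solves_system alpha F Yd Y P.

Definition cc : R := alpha^-1 / hstep R N ^+ 4.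
Definition sv (Yn Pn : gvec R N) : gvec R N :=
  fun i j => nrm cc (Y i j - Yn i j) (P i j - Pn i j).

Lemma hstep_neq0 : hstep R N != 0.
Proof. by rewrite /hstep invr_eq0 pnatr_eq0 -lt0n. Qed.

Lemma cc_eq : cc = alpha^-1 * (hstep R N ^- 2) ^+ 2.
Proof. by rewrite /cc exprVn -exprM. Qed.

Lemma cc_ge0 : 0 <= cc.
Proof. rewrite cc_eq; apply: mulr_ge0; [rewrite invr_ge0; exact: ltW | exact: sqr_ge0]. Qed.

Lemma in_dom_interior C (i j : nat) : valid_cells N C -> in_dom C i j -> Defs.interior N i j.
Proof.
move=> hv /and5P [h1 h2 _ _ /andP [_ hc]].
rewrite /Defs.interior h1 h2; by have [-> ->] := hv _ _ hc.
Qed.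

Lemma gatM k (Z : gvec R N) x y : gat (fun a b => k * Z a b) x y = k * gat Z x y.
Proof. by []. Qed.

Lemma step_cmp C Y0 P0 Y1 P1 (W0 W1 : gvec R N) : valid_cells N C ->
  sub_step alpha F Yd C Y0 P0 Y1 P1 -> sub_step_W C W0 W1 ->
  (forall i j, sv Y0 P0 i j <= W0 i j) -> forall i j, sv Y1 P1 i j <= W1 i j.
Proof.
move=> hv hst hw hle.
suff : forall i j, (fun a b => sv Y1 P1 a b - W1 a b) i j <= 0.
  by move=> h i j; have := h i j => /= ?; lra.
apply: (maxprin C _ hv); last first.
  move=> i j hD /=; rewrite /sv; have := hst i j; have := hw i j; rewrite (negbTE hD).
  move=> -> [-> ->]; have := hle i j; rewrite /sv; lra.
move=> i j hD.
have hI := in_dom_interior C i j hv hD.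
have := hsol i j; rewrite hI => -[E1 E2].
have := hst i j; rewrite hD => -[E1' E2'].
have := hw i j; rewrite hD => EW.
have gi : forall Z : gvec R N, Z i j = gat Z i j by move=> Z; rewrite /gat !inord_val.
move: E1 E2 E1' E2' EW; rewrite /Lh !gatM (gi Y) (gi Y1) (gi P) (gi P1).
set A := hstep R N ^- 2. set ai := alpha^-1.
have A0 : A != 0 by rewrite /A invr_eq0 expf_eq0 (negbTE hstep_neq0) andbF.
move=> E1 E2 E1' E2' EW.
have gD : forall x y, gat (fun i j : 'I_N.+1 => sv Y1 P1 i j - W1 i j) x y =
   nrm cc (gat Y x y - gat Y1 x y) (gat P x y - gat P1 x y) - gat W1 x y by [].
rewrite !gD.
set e := gat Y i j - gat Y1 i j.
set q := gat P i j - gat P1 i j.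
set e1 := gat Y i.-1 j - gat Y1 i.-1 j. set e2 := gat Y i.+1 j - gat Y1 i.+1 j.
set e3 := gat Y i j.-1 - gat Y1 i j.-1. set e4 := gat Y i j.+1 - gat Y1 i j.+1.
set q1 := gat P i.-1 j - gat P1 i.-1 j. set q2 := gat P i.+1 j - gat P1 i.+1 j.
set q3 := gat P i j.-1 - gat P1 i j.-1. set q4 := gat P i j.+1 - gat P1 i j.+1.
have k1 : e1 + e2 + e3 + e4 = 4 * e + alpha^-1 * q.
  have h : A * (e1 + e2 + e3 + e4 - (4 * e + alpha^-1 * q)) = 0.
    rewrite /e /q /e1 /e2 /e3 /e4; move: E1 E1'; rewrite -/ai; move=> h1 h2; lra.
  move/eqP: h; rewrite mulf_eq0 (negbTE A0) /= subr_eq0 => /eqP //.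
have k2 : e = A ^+ 2 * (4 * q - (q1 + q2 + q3 + q4)).
  rewrite /e /q /q1 /q2 /q3 /q4; move: E2 E2'; nra.
have kW : gat W1 i.-1 j + gat W1 i.+1 j + gat W1 i j.-1 + gat W1 i j.+1 = 4 * gat W1 i j.
  have h : A * (gat W1 i.-1 j + gat W1 i.+1 j + gat W1 i j.-1 + gat W1 i j.+1 - 4 * gat W1 i j) = 0.
    move: EW; nra.
  move/eqP: h; rewrite mulf_eq0 (negbTE A0) /= subr_eq0 => /eqP //.
have hk := key_ineq (alpha^-1) A e q _ _ ltac:(by rewrite invr_gt0) k1 k2.
have ht := nrm_tri4 cc e1 q1 e2 q2 e3 q3 e4 q4 cc_ge0.
rewrite -/A -cc_eq in hk.
lra.
Qed.

Lemma mxnorm_ge (Z : gvec R N) i j : `|Z i j| <= mxnorm Z.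
Proof.
rewrite /mxnorm; apply: le_trans (le_bigmax _ (fun i => \big[Num.max/0]_(j < N.+1) `|Z i j|) i).
exact: (le_bigmax _ (fun j => `|Z i j|) j).
Qed.

Lemma mxnorm_le (Z : gvec R N) c : 0 <= c -> (forall i j, `|Z i j| <= c) -> mxnorm Z <= c.
Proof. move=> hc h; apply: bigmax_le => // i _; apply: bigmax_le => // j _; exact: h. Qed.

Lemma cc_gt0 : 0 < cc.
Proof.
rewrite /cc; apply: divr_gt0; first by rewrite invr_gt0.
apply: exprn_gt0; rewrite /hstep invr_gt0 ltr0n //.
Qed.

Lemma nrm_bound1 (x y : R) : `|x| <= nrm cc x y.
Proof.
apply: le_sq; first exact: nrm_ge0.
rewrite nrm_sq ?cc_ge0 // real_normK ?num_real //.
have := mulr_ge0 cc_ge0 (sqr_ge0 y); lra.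
Qed.

Lemma nrm_bound2 (x y : R) : `|y| <= (Num.sqrt cc)^-1 * nrm cc x y.
Proof.
have hs : 0 < Num.sqrt cc by rewrite sqrtr_gt0 cc_gt0.
have h : Num.sqrt cc * `|y| <= nrm cc x y.
  apply: le_sq; first exact: nrm_ge0.
  rewrite nrm_sq ?cc_ge0 // exprMn sqr_sqrtr ?cc_ge0 // real_normK ?num_real //.
  have := sqr_ge0 x; lra.
by rewrite -(ler_pM2l hs) mulrA mulfV ?mul1r // gt_eqF.
Qed.


Import numFieldNormedType.Exports.
Local Open Scope classical_set_scope.
Lemma cvg0_dom (u w : nat -> R) (K : R) : (forall n, `|u n| <= K * w n) ->
  w @ \oo --> 0 -> u @ \oo --> 0.
Proof.
move=> hb hw.
have h1 : (fun n => K * w n) @ \oo --> 0.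
  have h := @cvgMl_tmp _ _ _ _ w K 0 hw; rewrite mulr0 in h; exact: h.
have h2 : (fun n => - (K * w n)) @ \oo --> 0.
  by rewrite -oppr0; apply: cvgN.
apply: (squeeze_cvgr _ h2 h1); apply: filterE => n.
by have := hb n; rewrite ler_norml.
Qed.

Lemma solve_ex C (hv : valid_cells N C) (G : gvec R N) : exists W, sub_step_W C G W.
Proof.
have inj : forall A, Tf C A = 0 -> A = 0.
  move=> A hA.
  have hpt : forall i j : 'I_N.+1, if in_dom C i j then Lh (fun a b => A a b) i j = 0 else A i j = 0.
    move=> i j; have := congr1 (fun M : 'M[R]_(N.+1, N.+1) => M i j) hA; rewrite !mxE; by case: ifP.
  have sub : forall s : R, forall i j, s * A i j <= 0.
    move=> s; apply: (maxprin C (fun i j => s * A i j) hv).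
      move=> i j hD; have := hpt i j; rewrite hD /Lh /gat => h.
      set inner := (X in _ * X = 0) in h.
      have h0 : inner = 0.
        move/eqP: h; rewrite mulf_eq0 oppr_eq0 invr_eq0 expf_eq0 (negbTE hstep_neq0) andbF /=.
        by move/eqP.
      have : s * inner = 0 by rewrite h0 mulr0.
      rewrite /inner; lra.
    by move=> i j hD; have := hpt i j; rewrite (negbTE hD) => ->; rewrite mulr0.
  apply/matrixP => i j; rewrite mxE; have h1 := sub 1 i j; have h2 := sub (-1) i j; lra.
have [A hA] := Tf_surj C inj (\matrix_(i, j) (if in_dom C i j then 0 else G i j)).
exists (fun i j => A i j) => i j; have := congr1 (fun M : 'M[R]_(N.+1, N.+1) => M i j) hA; rewrite !mxE; by case: ifP.
Qed.


Definition Cs (C1 C2 : cellset) (n : nat) := if odd n.+1 then C1 else C2.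

Lemma Cs_valid C1 C2 n : valid_cells N C1 -> valid_cells N C2 -> valid_cells N (Cs C1 C2 n).
Proof. by rewrite /Cs; case: ifP. Qed.

Lemma bdry_iter C1 C2 Yk Pk : valid_cells N C1 -> valid_cells N C2 ->
  schwarz_YP alpha F Yd C1 C2 Yk Pk ->
  forall n (i j : 'I_N.+1), ~~ Defs.interior N i j -> Yk n i j = 0 /\ Pk n i j = 0.
Proof.
move=> hv1 hv2 [h0 [h0' hs]]; elim=> [|n IH] i j hI; first by rewrite h0 ?h0'.
have := hs n i j; rewrite -/(Cs C1 C2 n).
have hv := Cs_valid C1 C2 n hv1 hv2.
case: ifP => hD; first by have := in_dom_interior _ _ _ hv hD; rewrite (negbTE hI).
by move=> [-> ->]; apply: IH.
Qed.

Lemma sv_bdry C1 C2 Yk Pk : valid_cells N C1 -> valid_cells N C2 ->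
  schwarz_YP alpha F Yd C1 C2 Yk Pk -> forall n, bdry_zero (sv (Yk n) (Pk n)).
Proof.
move=> hv1 hv2 hYP n i j hI.
rewrite /sv; have [-> ->] := bdry_iter _ _ _ _ hv1 hv2 hYP n _ _ hI.
have := hsol i j; rewrite (negbTE hI) => -[-> ->].
by rewrite /nrm subrr expr2 !mul0r mulr0 addr0 sqrtr0.
Qed.

Lemma compare C1 C2 Yk Pk : valid_cells N C1 -> valid_cells N C2 ->
  schwarz_YP alpha F Yd C1 C2 Yk Pk -> forall m0, ~~ odd m0 ->
  forall W : nat -> gvec R N, W 0%N = sv (Yk m0) (Pk m0) ->
  (forall n, sub_step_W (Cs C1 C2 n) (W n) (W n.+1)) ->
  forall n i j, sv (Yk (m0 + n)%N) (Pk (m0 + n)%N) i j <= W n i j.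
Proof.
move=> hv1 hv2 [_ [_ hs]] m0 hm0 W hW0 hW; elim=> [|n IH] i j.
  by rewrite addn0 hW0.
rewrite addnS; apply: (step_cmp (Cs C1 C2 n) _ _ _ _ _ _ _ _ (hW n) IH i j).
  exact: Cs_valid.
have := hs (m0 + n)%N; rewrite /Cs -addnS oddD (negbTE hm0) //.
Qed.


Lemma main_sec (C1 C2 : cellset) : overlapping_decomposition N C1 C2 ->
  (W_convergent R N C1 C2 -> YP_convergent alpha F Yd Y P C1 C2) /\
  (forall rho : R, 0 < rho < 1 -> W_rate N C1 C2 rho ->
     forall Yk Pk : nat -> gvec R N, schwarz_YP alpha F Yd C1 C2 Yk Pk ->
     forall k : nat, (0 < k)%N ->
       mxnorm (errE alpha Y P (Yk (2 * k)%N) (Pk (2 * k)%N))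
       <= rho * mxnorm (errE alpha Y P (Yk (2 * k.-1)%N) (Pk (2 * k.-1)%N))).
Proof.
move=> [hv1 hv2 _ _].
have hsolve : forall (p : nat * gvec R N), exists W, sub_step_W (Cs C1 C2 p.1) p.2 W.
  by move=> p; apply: solve_ex; apply: Cs_valid.
case: (choice hsolve) => sol hsolP.
pose Wk (W0 : gvec R N) := fix f n := if n is m.+1 then sol (m, f m) else W0.
have hWs : forall W0 n, sub_step_W (Cs C1 C2 n) (Wk W0 n) (Wk W0 n.+1).
  by move=> W0 n; exact: (hsolP (n, Wk W0 n)).
have hWk : forall W0, bdry_zero W0 -> schwarz_W C1 C2 (Wk W0).
  by move=> W0 h0; split => // n; exact: hWs.
split.
  move=> hWc Yk Pk hYP i j.
  pose W := Wk (sv (Yk 0%N) (Pk 0%N)).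
  have hc := compare _ _ _ _ hv1 hv2 hYP 0%N isT W erefl (hWs _).
  have hconv := hWc _ (hWk _ (sv_bdry _ _ _ _ hv1 hv2 hYP 0)) i j.
  split; apply/subr_cvg0.
    apply: (cvg0_dom _ _ 1 _ hconv) => n.
    rewrite mul1r distrC; apply: le_trans (hc n i j).
    exact: nrm_bound1.
  apply: (cvg0_dom _ _ ((Num.sqrt cc)^-1) _ hconv) => n.
  rewrite distrC; apply: le_trans (nrm_bound2 _ _) _.
  rewrite ler_pM2l ?invr_gt0 ?sqrtr_gt0 ?cc_gt0 //.
  exact: (hc n i j).
move=> rho /andP [hr0 hr1] hrate Yk Pk hYP k hk.
have e2k : (2 * k = 2 * k.-1 + 2)%N by case: k hk => // k _; rewrite mulnS addnC.
set m0 := (2 * k.-1)%N in e2k *.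
have hm0 : ~~ odd m0 by rewrite /m0 oddM.
pose W := Wk (sv (Yk m0) (Pk m0)).
have hc := compare _ _ _ _ hv1 hv2 hYP m0 hm0 W erefl (hWs _).
have hr : mxnorm (W 2%N) <= rho * mxnorm (W 0%N) := hrate W (hWk _ (sv_bdry _ _ _ _ hv1 hv2 hYP m0)) 1%N isT.
rewrite e2k.
set ME := mxnorm (errE alpha Y P (Yk m0) (Pk m0)).
set M0 := mxnorm (W 0%N).
have hE : forall n i j, errE alpha Y P (Yk n) (Pk n) i j = sv (Yk n) (Pk n) i j ^+ 2.
  by move=> n i j; rewrite /sv nrm_sq ?cc_ge0.
have hME : 0 <= ME by apply: le_trans (mxnorm_ge _ ord0 ord0); exact: normr_ge0.
have hM0 : 0 <= M0 by apply: le_trans (mxnorm_ge _ ord0 ord0); exact: normr_ge0.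
have hM0E : M0 ^+ 2 <= ME.
  have : M0 <= Num.sqrt ME.
    apply: mxnorm_le; first exact: sqrtr_ge0.
    move=> i j; rewrite /W /= ger0_norm /sv ?nrm_ge0 //.
    apply: le_sq; first exact: sqrtr_ge0.
    rewrite [X in _ <= X]sqr_sqrtr //; have := hE m0 i j; rewrite /sv => <-.
    by apply: le_trans (mxnorm_ge _ i j); exact: ler_norm.
  move=> h; have h2 := sqr_sqrtr hME.
  have h3 := sqrtr_ge0 ME. nra.
apply: mxnorm_le.
  apply: mulr_ge0 => //; exact: ltW.
move=> i j; rewrite hE ger0_norm ?sqr_ge0 //.
have h1 : sv (Yk (m0 + 2)%N) (Pk (m0 + 2)%N) i j <= rho * M0.
  apply: le_trans (hc 2%N i j) _; apply: le_trans (ler_norm _) _.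
  by apply: le_trans (mxnorm_ge _ i j) hr.
have h0 : 0 <= sv (Yk (m0 + 2)%N) (Pk (m0 + 2)%N) i j by exact: nrm_ge0.
have h2 : sv (Yk (m0 + 2)%N) (Pk (m0 + 2)%N) i j ^+ 2 <= (rho * M0) ^+ 2.
  by rewrite ler_sqr ?nnegrE // mulr_ge0 // ltW.
apply: le_trans h2 _.
rewrite exprMn.
have : rho ^+ 2 <= rho by rewrite expr2 ler_piMr // ltW.
nra.
Qed.

End Main.
End Grid.

Theorem theorem4p2 (R : realType) (N : nat) (hN : (2 <= N)%N)
    (C1 C2 : cellset) (hdec : overlapping_decomposition N C1 C2)
    (alpha : R) (halpha : 0 < alpha) (F Yd Y P : gvec R N)
    (hsol : solves_system alpha F Yd Y P) :
  (W_convergent R N C1 C2 -> YP_convergent alpha F Yd Y P C1 C2) /\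
  (forall rho : R, 0 < rho < 1 -> W_rate N C1 C2 rho ->
     forall Yk Pk : nat -> gvec R N, schwarz_YP alpha F Yd C1 C2 Yk Pk ->
     forall k : nat, (0 < k)%N ->
       mxnorm (errE alpha Y P (Yk (2 * k)%N) (Pk (2 * k)%N))
       <= rho * mxnorm (errE alpha Y P (Yk (2 * k.-1)%N) (Pk (2 * k.-1)%N))).
Proof.
exact: (main_sec R N (leq_trans (isT : (1 <= 2)%N) hN) alpha halpha F Yd Y P hsol C1 C2 hdec).
Qed.
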